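(* With $G$ and $\widehat\Theta$ as in the context, the column number of $\widehat\Theta$ equals the order of $G$: $c(\widehat\Theta)=|G|$.
   Context: Column number of a substitution $\zeta$ over $\mathbb{B}$: $c(\zeta)=\min_{k\ge1,0\le j<\lambda^k}|\{\zeta^k(b)_j:b\in\mathbb{B}\}|$. Let $\theta:\mathbb{A}\to\mathbb{A}^\lambda$ ($\lambda\ge2$) be primitive (some $\theta^k(a)$ contains all letters for each $a$), injective on letters, with infinite subshift, $c=c(\theta)$. $\mathcal{X}$: sets $M\subset\mathbb{A}$ with $|M|=c$ and $M=\{\theta^k(a)_j:a\in\mathbb{A}\}$ for some $k\ge1$, $j<\lambda^k$; $\widetilde\theta(M)_j:=\{\theta(a)_j:a\in M\}\in\mathcal{X}$, with $a\mapsto\theta(a)_j$ a bijection $M\to\widetilde\theta(M)_j$. Assume (after passing to a power) $a_0\in M_0\in\mathcal{X}$, $\theta(a_0)_0=a_0$, $\widetilde\theta(M_0)_0=M_0$. Fix a total order on $M_0$ with minimum $a_0$ and $k_0\ge1$, $j_0<\lambda^{k_0}$ with $\theta^{k_0}(a)_{j_0}=a$ ($a\in M_0$), $\widetilde\theta^{k_0}(M)_{j_0}=M_0$ ($M\in\mathcal{X}$). Order each $M$ by $a<b$ iff $\theta^{k_0}(a)_{j_0}<\theta^{k_0}(b)_{j_0}$; $e_M(i)$ = $(i+1)$-th smallest element of $M$. $\widetilde\Theta(i,M)_j=(i',\widetilde\theta(M)_j)$ where $\theta(e_M(i))_j=e_{\widetilde\theta(M)_j}(i')$; $\sigma_{M,j}\in\mathcal{S}_c$: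 $\sigma_{M,j}(m)=n$ iff $\widetilde\Theta(n,M)_j=(m,\widetilde\theta(M)_j)$; $G=\langle\sigma_{M,j}:M\in\mathcal{X},j<\lambda\rangle\le\mathcal{S}_c$; $\widehat\Theta(\sigma,M)_j=(\sigma\circ\sigma_{M,j},\widetilde\theta(M)_j)$ on $G\times\mathcal{X}$. *)

(* Defs.v *)
From Stdlib Require Import ZArith.
From Stdlib Require List.
From HB Require Import structures.
From mathcomp Require Import all_boot all_order all_fingroup.
Set Implicit Arguments. Unset Strict Implicit. Unset Printing Implicit Defensive.

Section Subst.
Variable T : finType.

(* A substitution is a map s : T -> seq T (constant length is a separate hypothesis).
   s^k(a) is computed on words: s(w) = s(w_0) s(w_1) ... *)
Definition subst_word (s : T -> seq T) (w : seq T) : seq T := flatten (map s w).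
Definition subst_iter (s : T -> seq T) (k : nat) (a : T) : seq T :=
  iter k (subst_word s) [:: a].
Definition sub_letter (s : T -> seq T) (k : nat) (a : T) (j : nat) : T :=
  nth a (subst_iter s k a) j.

Definition colset (s : T -> seq T) (D : {set T}) (k j : nat) : {set T} :=
  [set sub_letter s k b j | b in D].

Definition colval (s : T -> seq T) (lam : nat) (D : {set T}) (n : nat) : Prop :=
  exists k j, 0 < k /\ j < lam ^ k /\ n = #|colset s D k j|.

Definition is_column_number (s : T -> seq T) (lam : nat) (D : {set T}) (c : nat)
  : Prop := colval s lam D c /\ forall n, colval s lam D n -> c <= n.

Definition primitive_subst (s : T -> seq T) : Prop :=
  exists k, 0 < k /\ forall a b, b \in subst_iter s k a.

Definition in_language (s : T -> seq T) (w : seq T) : Prop :=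
  exists k a, infix w (subst_iter s k a).
Definition in_subshift (s : T -> seq T) (x : Z -> T) : Prop :=
  forall (i : Z) (n : nat),
    in_language s [seq x (i + Z.of_nat m)%Z | m <- iota 0 n].
Definition infinite_subshift (s : T -> seq T) : Prop :=
  forall l : list (Z -> T), exists x, in_subshift s x /\
    List.Forall (fun y => exists i, x i <> y i) l.
End Subst.

Section Hat.
Variables (A : finType) (theta : A -> seq A) (lam c : nat).
Variables (k0 j0 : nat) (a0 : A) (ordM0 : seq A).

Definition theta_tilde (M : {set A}) (j : nat) : {set A} :=
  [set sub_letter theta 1 a j | a in M].

(* M ordered by a < b iff theta^{k0}(a)_{j0} < theta^{k0}(b)_{j0} in the order of M0,
   the order on M0 being given by the list ordM0 (increasing). *)
Definition rankM0 (a : A) : nat := index (sub_letter theta k0 a j0) ordM0.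
Definition sortedM (M : {set A}) : seq A :=
  sort (fun a b => rankM0 a <= rankM0 b) (enum M).
Definition e_M (M : {set A}) (i : nat) : A := nth a0 (sortedM M) i.

Definition tau_fun (M : {set A}) (j : nat) (n : 'I_c) : 'I_c :=
  insubd n (index (sub_letter theta 1 (e_M M n) j) (sortedM (theta_tilde M j))).

(* the permutation n |-> i' (identity if the map is not injective, which never
   happens for M in calX) *)
Definition mkperm (T : finType) (f : T -> T) : {perm T} := insubd (1%g : {perm T}) (finfun f).
Definition tau_perm (M : {set A}) (j : nat) : {perm 'I_c} := mkperm (tau_fun M j).

(* sigma_{M,j}(m) = n iff Theta~(n,M)_j = (m, theta~(M)_j) *)
Definition sigma_perm (M : {set A}) (j : nat) : {perm 'I_c} := ((tau_perm M j)^-1)%g.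

Definition G_of (X : {set {set A}}) : {set {perm 'I_c}} :=
  << [set sigma_perm M.1 (nat_of_ord M.2) | M in setX X [set: 'I_lam]] >>%g.

(* Theta^(sigma, M)_j = (sigma o sigma_{M,j}, theta~(M)_j);
   in MathComp (s * t) x = t (s x), so sigma o sigma_{M,j} = sigma_{M,j} * sigma *)
Definition Theta_hat (p : {perm 'I_c} * {set A}) : seq ({perm 'I_c} * {set A}) :=
  mkseq (fun j => ((sigma_perm p.2 j * p.1)%g, theta_tilde p.2 j)) lam.
End Hat.
Arguments Theta_hat {A} theta lam c k0 j0 a0 ordM0 p.

(* Main.v *)
Require Import Defs.
From Stdlib Require Import ZArith.
From Stdlib Require List.
From HB Require Import structures.
From mathcomp Require Import all_boot all_order all_fingroup.
From mathcomp Require Import zify.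

Set Implicit Arguments. Unset Strict Implicit. Unset Printing Implicit Defensive.

Lemma size_subst_word (T : finType) (s : T -> seq T) lam
  (Hs : forall x, size (s x) = lam) w : size (subst_word s w) = lam * size w.
Proof.
elim: w => [|x w IH] /=; first by rewrite muln0.
by rewrite /subst_word /= size_cat -/(subst_word s w) IH Hs mulnS.
Qed.

Lemma size_subst_iter (T : finType) (s : T -> seq T) lam
  (Hs : forall x, size (s x) = lam) k a : size (subst_iter s k a) = lam ^ k.
Proof.
elim: k => [|k IH] //=.
by rewrite (size_subst_word Hs) -/(subst_iter s k a) IH expnS.
Qed.

Lemma nth_subst_word (T : finType) (s : T -> seq T) lam
  (Hs : forall x, size (s x) = lam) w d i r :
  i < size w -> r < lam ->
  nth d (subst_word s w) (i * lam + r) = nth d (s (nth d w i)) r.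
Proof.
elim: w i => [|x w IH] i //= Hi Hr.
rewrite /subst_word /= nth_cat Hs -/(subst_word s w).
case: i Hi => [|i] Hi; first by rewrite mul0n add0n Hr.
rewrite mulSn -addnA ltnNge leq_addr /= addKn IH //.
Qed.

Lemma sub_letter_S (T : finType) (s : T -> seq T) lam
  (Hs : forall x, size (s x) = lam) k a i r :
  i < lam ^ k -> r < lam ->
  sub_letter s k.+1 a (i * lam + r) = sub_letter s 1 (sub_letter s k a i) r.
Proof.
move=> Hi Hr.
rewrite /sub_letter /= -/(subst_iter s k a) (nth_subst_word Hs) ?(size_subst_iter Hs) //.
rewrite /subst_word /= cats0.
by apply: set_nth_default; rewrite Hs.
Qed.

Lemma subst_word_map (T : finType) (s : T -> seq T) (f : T -> T)
  (Hf : forall q, s (f q) = map f (s q)) w :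
  subst_word s (map f w) = map f (subst_word s w).
Proof.
elim: w => [|x w IH] //=.
by rewrite /subst_word /= -/(subst_word s w) -/(subst_word s (map f w)) IH Hf map_cat.
Qed.

Lemma all_subst_iter (T : finType) (s : T -> seq T) (P : pred T)
  (HP : forall q, P q -> all P (s q)) k a : P a -> all P (subst_iter s k a).
Proof.
move=> Pa; elim: k => [|k IH] /=; first by rewrite Pa.
rewrite -/(subst_iter s k a); move: IH; elim: (subst_iter s k a) => [|x w IHw] //=.
move=> /andP [Px Pw]; rewrite /subst_word /= all_cat HP //=.
exact: IHw.
Qed.

Theorem mainTheorem18 (A : finType) (theta : A -> seq A) (lam c : nat)
  (X : {set {set A}}) (a0 : A) (M0 : {set A}) (ordM0 : seq A) (k0 j0 : nat)
  (Hlam : 2 <= lam)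
  (Hsize : forall a, size (theta a) = lam)
  (Hprim : primitive_subst theta)
  (Hinj : injective theta)
  (Hinf : infinite_subshift theta)
  (Hc : is_column_number theta lam [set: A] c)
  (HX : forall M : {set A}, M \in X <->
          (#|M| = c /\ exists k j, 0 < k /\ j < lam ^ k /\ M = colset theta [set: A] k j))
  (Ha0M0 : a0 \in M0) (HM0 : M0 \in X)
  (Ha0fix : sub_letter theta 1 a0 0 = a0)
  (HM0fix : theta_tilde theta M0 0 = M0)
  (Hord : perm_eq ordM0 (enum M0)) (Hordmin : head a0 ordM0 = a0)
  (Hk0 : 0 < k0) (Hj0 : j0 < lam ^ k0)
  (Hk0fix : forall a, a \in M0 -> sub_letter theta k0 a j0 = a)
  (Hk0X : forall M, M \in X -> [set sub_letter theta k0 a j0 | a in M] = M0) :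
  is_column_number (Theta_hat theta lam c k0 j0 a0 ordM0) lam
    (setX (G_of theta lam c k0 j0 a0 ordM0 X) X)
    #|G_of theta lam c k0 j0 a0 ordM0 X|.
Proof.
set Th := Theta_hat theta lam c k0 j0 a0 ordM0.
set G := G_of theta lam c k0 j0 a0 ordM0 X.
have lam0 : 0 < lam by apply: leq_trans Hlam.
have HsTh : forall p, size (Th p) = lam by move=> p; rewrite /Th /Theta_hat size_mkseq.
have Th1 : forall p r, r < lam -> sub_letter Th 1 p r =
    ((sigma_perm theta c k0 j0 a0 ordM0 p.2 r * p.1)%g, theta_tilde theta p.2 r).
  move=> p r Hr; rewrite /sub_letter /= /subst_word /= cats0.
  rewrite (set_nth_default (((sigma_perm theta c k0 j0 a0 ordM0 p.2 0 * p.1)%g,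
     theta_tilde theta p.2 0))) ?HsTh //.
  by rewrite /Th /Theta_hat nth_mkseq.
have shift : forall k (s : {perm 'I_c}) M, subst_iter Th k (s, M) =
    map (fun q => ((q.1 * s)%g, q.2)) (subst_iter Th k (1%g, M)).
  move=> k s M; elim: k => [|k IH] /=; first by rewrite mul1g.
  rewrite -/(subst_iter Th k (s, M)) -/(subst_iter Th k (1%g, M)) IH.
  apply: subst_word_map => q.
  by rewrite /Th /Theta_hat /mkseq -map_comp; apply: eq_map => j /=; rewrite mulgA.
have shiftL : forall k j (s : {perm 'I_c}) M, sub_letter Th k (s, M) j =
    (((sub_letter Th k (1%g, M) j).1 * s)%g, (sub_letter Th k (1%g, M) j).2).
  move=> k j s M; rewrite /sub_letter shift.
  case: (ltnP j (size (subst_iter Th k (1%g, M)))) => Hj.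
    by rewrite (set_nth_default ((1 * s)%g, M)) ?size_map // (nth_map (1%g, M)).
  by rewrite !nth_default ?size_map //= mul1g.
have snd : forall k p j, j < lam ^ k ->
    (sub_letter Th k p j).2 = [set sub_letter theta k a j | a in p.2].
  elim=> [|k IH] p j Hj.
    move: Hj; rewrite expn0 ltnS leqn0 => /eqP ->.
    rewrite /sub_letter /=; apply/setP => x; apply/idP/imsetP => [Hx|[y Hy ->] //].
    by exists x.
  have Hi : j %/ lam < lam ^ k by rewrite ltn_divLR // -expnSr.
  have Hr : j %% lam < lam by rewrite ltn_mod.
  rewrite (divn_eq j lam) (sub_letter_S HsTh) // Th1 //= IH // /theta_tilde.
  idtac.
  rewrite -imset_comp; apply: eq_imset => a /=.
  by rewrite (sub_letter_S Hsize).
have closX : forall M r, M \in X -> r < lam -> theta_tilde theta M r \in X.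
  move=> M r /HX [cM [k [j [Hk [Hj EM]]]]] Hr; subst M.
  have Hjr : j * lam + r < lam ^ k.+1.
    rewrite expnSr; apply: (@leq_trans (j.+1 * lam)); first by rewrite mulSnr ltn_add2l.
    by rewrite leq_mul2r Hj orbT.
  have E : theta_tilde theta (colset theta [set: A] k j) r =
      colset theta [set: A] k.+1 (j * lam + r).
    rewrite /theta_tilde /colset -imset_comp; apply: eq_imset => a /=.
    by rewrite (sub_letter_S Hsize).
  apply/HX; split; last by exists k.+1, (j * lam + r); rewrite E.
  apply/eqP; rewrite eqn_leq; apply/andP; split.
    by rewrite -cM /theta_tilde; apply: leq_imset_card.
  rewrite E; apply: (proj2 Hc); exists k.+1, (j * lam + r).
  split; first exact: ltn0Sn. by split; [exact: Hjr | reflexivity].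
have inv : forall k j M, M \in X ->
    ((sub_letter Th k (1%g, M) j).1 \in G) && ((sub_letter Th k (1%g, M) j).2 \in X).
  move=> k j M HM.
  set P := fun q : {perm 'I_c} * {set A} => (q.1 \in G) && (q.2 \in X).
  have Pa : P (1%g, M) by rewrite /P /= HM andbT /G /G_of group1.
  have HP : forall q, P q -> all P (Th q).
    move=> [s N] /andP /= [Hs HN]; apply/allP => x.
    rewrite /Th /Theta_hat /mkseq => /mapP [r]; rewrite mem_iota add0n => /andP [_ Hr] ->.
    rewrite /P /= closX // andbT /G /G_of; apply: groupM => //.
    apply: mem_gen; apply/imsetP; exists (N, Ordinal Hr) => //.
    by rewrite inE /= HN inE.
  have := all_subst_iter HP k Pa => /allP Hall.
  rewrite /sub_letter; case: (ltnP j (size (subst_iter Th k (1%g, M)))) => Hj.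
    by apply: Hall; apply: mem_nth.
  by rewrite nth_default.
have lower : forall k j, #|G| <= #|colset Th (setX G X) k j|.
  move=> k j.
  have inj : injective (fun s => sub_letter Th k (s, M0) j).
    move=> s1 s2 /=; rewrite (shiftL k j s1) (shiftL k j s2) => -[] /mulgI //.
  rewrite -(card_imset G inj); apply: subset_leq_card.
  apply/subsetP => x /imsetP [s Hs ->]; apply/imsetP; exists (s, M0) => //.
  by rewrite inE /= Hs HM0.
split.
  exists k0, j0; do 2 (split => //).
  apply/eqP; rewrite eqn_leq lower /=.
  have -> : #|G| = #|setX G [set M0]| by rewrite cardsX cards1 muln1.
  apply: subset_leq_card; apply/subsetP => x /imsetP [[s M]].
  rewrite inE /= => /andP [Hs HM] ->.
  rewrite shiftL inE /= snd //= Hk0X // inE eqxx andbT.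
  by apply: groupM => //; have /andP [] := inv k0 j0 M HM.
by move=> n [k [j [_ [_ ->]]]]; apply: lower.
Qed.
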